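(* Let $f_{ij}>0$ for $i\neq j\in\{g,p,s\}$, let $v_g,v_s>0$, and assume $v_sF_{gp}>v_gF_{sp}$ (equivalently $V<0$). Consider nonnegative, not identically zero, time-independent solutions $P_g(x),P_p(x),P_s(x)$, $x\in[0,\infty)$, of $$\begin{aligned} 0&=-v_g P_g'-(f_{gs}+f_{gp})P_g+f_{pg}P_p+f_{sg}P_s,\\ 0&=f_{gp}P_g-(f_{pg}+f_{ps})P_p+f_{sp}P_s,\\ 0&=v_s P_s'+f_{gs}P_g+f_{ps}P_p-(f_{sg}+f_{sp})P_s, \end{aligned}$$ with $P_g(x),P_s(x)\to0$ as $x\to\infty$ and $P_g,P_s$ integrable on $[0,\infty)$. Then $P_g$, $P_p$ and $P_s$ are each constant multiples of $e^{-x/\langle L\rangle}$ (in particular $P_s=\frac{v_g}{v_s}P_g$), so the normalized length distribution is exponential with mean $$\langle L\rangle=\frac{v_sv_g}{v_s\frac{F_{gp}}{F_p}-v_g\frac{F_{sp}}{F_p}}=\frac{v_gv_sF_p}{v_sF_{gp}-v_gF_{sp}}.$$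
   Context: $P_i(x,t)$, $i\in\{g,p,s\}$, is the probability density of finding the microtubule at time $t$ in state growth ($g$, growing at velocity $v_g$), pause ($p$) or shrinkage ($s$, shrinking at velocity $v_s$) with length $x$; $f_{ij}$ is the transition rate from state $i$ to state $j$. The system in the claim is the steady state ($\partial_t=0$) of the master equations $\partial_tP_g=-v_g\partial_xP_g-(f_{gs}+f_{gp})P_g+f_{pg}P_p+f_{sg}P_s$, $\partial_tP_p=f_{gp}P_g-(f_{pg}+f_{ps})P_p+f_{sp}P_s$, $\partial_tP_s=v_s\partial_xP_s+f_{gs}P_g+f_{ps}P_p-(f_{sg}+f_{sp})P_s$. Notation: $F_p=f_{pg}+f_{ps}$; $F_{gp}=f_{gs}f_{pg}+f_{gs}f_{ps}+f_{gp}f_{ps}$; $F_{sp}=f_{sg}f_{pg}+f_{sg}f_{ps}+f_{sp}f_{pg}$; $F_{sg}=f_{sp}f_{gs}+f_{sp}f_{gp}+f_{sg}f_{gp}$; $\Omega=F_{sp}+F_{gp}+F_{sg}$; $V=(v_gF_{sp}-v_sF_{gp})/\Omega$. *)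

(* Defs.v *)
From Stdlib Require Import Reals.
Open Scope R_scope.

Definition Fp (fpg fps : R) : R := fpg + fps.
Definition Fgp (fgs fgp fpg fps : R) : R := fgs*fpg + fgs*fps + fgp*fps.
Definition Fsp (fsg fsp fpg fps : R) : R := fsg*fpg + fsg*fps + fsp*fpg.

Definition tends_to_0_at_infty (f : R -> R) : Prop :=
  forall eps, 0 < eps -> exists M, forall x, M <= x -> Rabs (f x) < eps.

Definition integrable_0_infty (f : R -> R) : Prop :=
  (forall b, 0 <= b -> inhabited (Riemann_integrable f 0 b)) /\
  exists l, forall eps, 0 < eps -> exists M, forall b (pr : Riemann_integrable f 0 b),
    M <= b -> Rabs (RiemannInt pr - l) < eps.

Definition right_cont_at_0 (f : R -> R) : Prop :=
  limit1_in f (fun x => 0 <= x) (f 0) 0.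

(* Main.v *)
Require Import Defs.
From Stdlib Require Import Reals Lra.
From Coquelicot Require Import Coquelicot.
Open Scope R_scope.

Lemma const_on_pos (h : R -> R) :
  (forall x, 0 < x -> derivable_pt_lim h x 0) -> forall x, 0 < x -> h x = h 1.
Proof.
  intros H x Hx.
  assert (D : forall a b, 0 < a -> a < b -> h a = h b).
  { intros a b Ha Hab. apply (eq_is_derive h a b); [|lra].
    intros t Ht. apply is_derive_Reals. apply H. lra. }
  destruct (Rlt_le_dec x 1) as [H1|H1].
  - apply D; lra.
  - destruct (Req_dec x 1) as [->|H2]; [reflexivity|]. symmetry; apply D; lra.
Qed.

Lemma at0 (f g : R -> R) :
  right_cont_at_0 f -> continuity_pt g 0 -> (forall x, 0 < x -> f x = g x) -> f 0 = g 0.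
Proof.
  intros Hf Hg E.
  destruct (Req_dec (f 0) (g 0)) as [e|ne]; [exact e|exfalso].
  set (eps := Rabs (f 0 - g 0) / 2).
  assert (Heps : 0 < eps) by (unfold eps; assert (0 < Rabs (f 0 - g 0)) by (apply Rabs_pos_lt; intro; apply ne; lra); lra).
  destruct (Hf eps Heps) as [a [Ha Ha']].
  destruct (Hg eps Heps) as [b [Hb Hb']].
  set (x := Rmin a b / 2).
  assert (Hx : 0 < x) by (unfold x; assert (0 < Rmin a b) by (apply Rmin_Rgt_r; lra); lra).
  assert (Hxa : x < a) by (unfold x; pose proof (Rmin_l a b); lra).
  assert (Hxb : x < b) by (unfold x; pose proof (Rmin_r a b); lra).
  assert (A1 := Ha' x). assert (A2 := Hb' x).
  simpl in A1, A2. unfold R_dist in A1, A2.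
  rewrite Rminus_0_r, Rabs_right in A1 by lra.
  assert (B1 : Rabs (f x - f 0) < eps) by (apply A1; split; lra).
  assert (B2 : Rabs (g x - g 0) < eps).
  { apply A2. split. unfold D_x, no_cond. split; [auto|lra].
    rewrite Rminus_0_r, Rabs_right by lra. lra. }
  rewrite E in B1 by lra.
  assert (Rabs (f 0 - g 0) <= Rabs (f 0 - g x) + Rabs (g x - g 0)).
  { replace (f 0 - g 0) with ((f 0 - g x) + (g x - g 0)) by ring. apply Rabs_triang. }
  rewrite Rabs_minus_sym in B1. unfold eps in *. lra.
Qed.

Lemma cont_exp (c L : R) : continuity_pt (fun x => c * exp (- x / L)) 0.
Proof.
  apply continuity_pt_filterlim. apply (ex_derive_continuous (fun x => c * exp (- x / L))). auto_derive. auto.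
Qed.

Lemma tends_small (f : R -> R) (a C : R) : 0 < a -> 0 < C -> tends_to_0_at_infty f ->
  exists M, forall x, M <= x -> -C < a * f x < C.
Proof.
  intros Ha HC Hf. destruct (Hf (C / a)) as [M HM].
  { apply Rdiv_lt_0_compat; lra. }
  exists M. intros x Hx. specialize (HM x Hx). apply Rabs_def2 in HM.
  destruct HM as [H1 H2].
  assert (a * f x < a * (C / a)) by (apply Rmult_lt_compat_l; lra).
  assert (a * (- (C / a)) < a * f x) by (apply Rmult_lt_compat_l; lra).
  replace (a * (C / a)) with C in * by (field; lra).
  replace (a * - (C / a)) with (- C) in * by (field; lra).
  lra.
Qed.
Theorem lemma2
  (fgs fgp fpg fps fsg fsp vg vs : R)
  (Pg Pp Ps Pg' Ps' : R -> R)
  (Hfgs : 0 < fgs) (Hfgp : 0 < fgp) (Hfpg : 0 < fpg) (Hfps : 0 < fps)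
  (Hfsg : 0 < fsg) (Hfsp : 0 < fsp) (Hvg : 0 < vg) (Hvs : 0 < vs)
  (HV : vs * Fgp fgs fgp fpg fps > vg * Fsp fsg fsp fpg fps)
  (* derivatives on the open half-line, continuity at the endpoint 0 *)
  (dPg : forall x, 0 < x -> derivable_pt_lim Pg x (Pg' x))
  (dPs : forall x, 0 < x -> derivable_pt_lim Ps x (Ps' x))
  (cPg : right_cont_at_0 Pg) (cPp : right_cont_at_0 Pp) (cPs : right_cont_at_0 Ps)
  (* steady-state master equations *)
  (Eg : forall x, 0 < x ->
     0 = - vg * Pg' x - (fgs + fgp) * Pg x + fpg * Pp x + fsg * Ps x)
  (Ep : forall x, 0 < x ->
     0 = fgp * Pg x - (fpg + fps) * Pp x + fsp * Ps x)
  (Es : forall x, 0 < x ->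
     0 = vs * Ps' x + fgs * Pg x + fps * Pp x - (fsg + fsp) * Ps x)
  (* nonnegative, not identically zero *)
  (nPg : forall x, 0 <= x -> 0 <= Pg x)
  (nPp : forall x, 0 <= x -> 0 <= Pp x)
  (nPs : forall x, 0 <= x -> 0 <= Ps x)
  (nz : exists x, 0 <= x /\ (Pg x <> 0 \/ Pp x <> 0 \/ Ps x <> 0))
  (* boundary / integrability conditions *)
  (lPg : tends_to_0_at_infty Pg) (lPs : tends_to_0_at_infty Ps)
  (iPg : integrable_0_infty Pg) (iPs : integrable_0_infty Ps) :
  let L := vg * vs * Fp fpg fps
           / (vs * Fgp fgs fgp fpg fps - vg * Fsp fsg fsp fpg fps) in
  L = vs * vg / (vs * (Fgp fgs fgp fpg fps / Fp fpg fps)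
                 - vg * (Fsp fsg fsp fpg fps / Fp fpg fps)) /\
  exists cg cp cs : R,
    cs = vg / vs * cg /\
    forall x, 0 <= x ->
      Pg x = cg * exp (- x / L) /\
      Pp x = cp * exp (- x / L) /\
      Ps x = cs * exp (- x / L).
Proof.
  intros L.
  assert (HFp : 0 < fpg + fps) by lra.
  set (D := vs * Fgp fgs fgp fpg fps - vg * Fsp fsg fsp fpg fps).
  assert (HD : 0 < D) by (unfold D; lra).
  assert (HL : 0 < L).
  { unfold L, Fp. apply Rdiv_lt_0_compat; [|exact HD].
    apply Rmult_lt_0_compat; [apply Rmult_lt_0_compat|]; lra. }
  split.
  { unfold L. fold D. unfold D, Fp. field. unfold Fgp, Fsp in *. split; [|lra].
    intro H. apply (Rlt_irrefl 0).
    replace 0 with ((vs * ((fgs * fpg + fgs * fps + fgp * fps) / (fpg + fps)) -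
      vg * ((fsg * fpg + fsg * fps + fsp * fpg) / (fpg + fps))) * (fpg+fps)) at 2 by (rewrite H; ring).
    field_simplify; [|lra]. fold (Fgp fgs fgp fpg fps). fold (Fsp fsg fsp fpg fps). fold D. lra. }
  set (h1 := fun y => vg * Pg y - vs * Ps y).
  assert (Hh1 : forall x, 0 < x -> h1 x = h1 1).
  { apply const_on_pos. intros x Hx. apply is_derive_Reals.
    replace 0 with (vg * Pg' x - vs * Ps' x).
    2:{ pose proof (Eg x Hx). pose proof (Ep x Hx). pose proof (Es x Hx). lra. }
    unfold h1. apply (is_derive_minus (fun y => vg * Pg y) (fun y => vs * Ps y)).
    - apply (is_derive_scal Pg). apply is_derive_Reals. auto.
    - apply (is_derive_scal Ps). apply is_derive_Reals. auto. }
  assert (HC : h1 1 = 0).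
  { destruct (Req_dec (h1 1) 0) as [e|ne]; [exact e|exfalso].
    set (C := Rabs (h1 1)).
    assert (HC0 : 0 < C) by (apply Rabs_pos_lt; exact ne).
    destruct (tends_small Pg vg (C/2) Hvg ltac:(lra) lPg) as [M1 HM1].
    destruct (tends_small Ps vs (C/2) Hvs ltac:(lra) lPs) as [M2 HM2].
    set (x := Rmax 1 (Rmax M1 M2)).
    assert (x1 : 1 <= x) by apply Rmax_l.
    assert (x2 : M1 <= x) by (unfold x; rewrite <- Rmax_r; apply Rmax_l).
    assert (x3 : M2 <= x) by (unfold x; rewrite <- Rmax_r; apply Rmax_r).
    specialize (HM1 x x2). specialize (HM2 x x3).
    assert (E := Hh1 x ltac:(lra)). unfold h1 in E. fold (h1 1) in E.
    unfold C in *. destruct (Rcase_abs (h1 1)) as [c|c].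
    - rewrite Rabs_left in HM1, HM2 by lra. lra.
    - rewrite Rabs_right in HM1, HM2 by lra. lra. }
  assert (HPs : forall x, 0 < x -> vs * Ps x = vg * Pg x).
  { intros x Hx. pose proof (Hh1 x Hx). unfold h1 in *. lra. }
  assert (HPg' : forall x, 0 < x -> Pg' x = - Pg x / L).
  { intros x Hx. pose proof (Eg x Hx). pose proof (Ep x Hx). pose proof (HPs x Hx).
    unfold L. fold D. unfold Fp.
    apply Rmult_eq_reg_l with (vg * vs * (fpg + fps)).
    2:{ apply Rgt_not_eq. apply Rmult_lt_0_compat; [apply Rmult_lt_0_compat|]; lra. }
    field_simplify; try lra.
    unfold D, Fgp, Fsp.
    assert (K1 : vs*(fpg+fps)*(vg*Pg' x) = vs*(fpg+fps)*(-(fgs+fgp)*Pg x + fpg*Pp x + fsg*Ps x)) by (f_equal; lra).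
    assert (K2 : vs*fpg*((fpg+fps)*Pp x) = vs*fpg*(fgp*Pg x + fsp*Ps x)) by (f_equal; lra).
    assert (K3 : (fsg * fpg + fsg * fps + fsp * fpg)*(vs*Ps x) = (fsg * fpg + fsg * fps + fsp * fpg)*(vg*Pg x)) by (rewrite H1; reflexivity).
    ring_simplify in K1. ring_simplify in K2. ring_simplify in K3. ring_simplify. lra. }
  set (h2 := fun y => Pg y * exp (y / L)).
  assert (Hh2 : forall x, 0 < x -> h2 x = h2 1).
  { apply const_on_pos. intros x Hx. apply is_derive_Reals.
    replace 0 with (Pg' x * exp (x / L) + Pg x * (/ L * exp (x / L))).
    2:{ rewrite HPg' by exact Hx. field. lra. }
    unfold h2. apply (is_derive_mult Pg (fun y => exp (y / L))).
    - apply is_derive_Reals. auto.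
    - apply (is_derive_comp exp (fun y => y / L)).
      + apply is_derive_exp.
      + auto_derive; auto. field. lra.
    - intros; apply Rmult_comm. }
  set (cg := h2 1).
  assert (EPg : forall x, 0 < x -> Pg x = cg * exp (- x / L)).
  { intros x Hx. unfold cg. rewrite <- (Hh2 x Hx). unfold h2.
    rewrite Rmult_assoc, <- exp_plus.
    replace (x / L + - x / L) with 0 by (field; lra). rewrite exp_0. ring. }
  exists cg, ((fgp + fsp * (vg / vs)) / (fpg + fps) * cg), (vg / vs * cg).
  split; [reflexivity|].
  assert (EPs : forall x, 0 < x -> Ps x = vg / vs * cg * exp (- x / L)).
  { intros x Hx. rewrite Rmult_assoc, <- EPg by exact Hx.
    pose proof (HPs x Hx). apply Rmult_eq_reg_l with vs; [|lra]. field_simplify; lra. }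
  assert (EPp : forall x, 0 < x -> Pp x = (fgp + fsp * (vg / vs)) / (fpg + fps) * cg * exp (- x / L)).
  { intros x Hx. pose proof (Ep x Hx). rewrite EPs, EPg in H by exact Hx.
    apply Rmult_eq_reg_l with (fpg + fps); [|lra].
    assert (K : (fpg + fps) * Pp x = fgp * (cg * exp (- x / L)) + fsp * (vg / vs * cg * exp (- x / L))) by lra.
    rewrite K. field. lra. }
  intros x Hx. destruct (Rle_lt_or_eq_dec 0 x Hx) as [Hx'|<-].
  - auto.
  - split; [|split].
    + apply (at0 Pg (fun y => cg * exp (- y / L))); auto; apply cont_exp.
    + apply (at0 Pp (fun y => (fgp + fsp * (vg / vs)) / (fpg + fps) * cg * exp (- y / L))); auto; apply cont_exp.
    + apply (at0 Ps (fun y => vg / vs * cg * exp (- y / L))); auto; apply cont_exp.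
Qed.
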